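(* Let $d\ge2$ and $\overrightarrow{w}\in(0,\infty)^d$. There exists a $\overrightarrow{w}$-CM random vector $\overrightarrow{U}=(U_1,\dots,U_d)$ with uniform$[0,1]$ marginals (equivalently, a $\overrightarrow{w}$-CM $d$-dimensional copula) if and only if $$\max\{w_1,\dots,w_d\}\le\sum_{i=1}^dw_i-\max\{w_1,\dots,w_d\}.$$
   Context: A random vector $\overrightarrow{U}=(U_1,\dots,U_d)$ with each $U_i$ uniform on $[0,1]$ is $\overrightarrow{w}$-CM if $P\left(\sum_{i=1}^d w_iU_i=\frac12\sum_{i=1}^d w_i\right)=1$; its distribution function (a copula) is then called $\overrightarrow{w}$-CM. *)

(* Defs.v *)
From HB Require Import structures.
From mathcomp Require Import all_boot all_order all_algebra.
From mathcomp Require Import all_classical all_reals all_analysis.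
Set Implicit Arguments. Unset Strict Implicit. Unset Printing Implicit Defensive.
Import Order.TTheory GRing.Theory Num.Theory.
Local Open Scope classical_set_scope.
Local Open Scope ring_scope.

Definition is_uniform01 (R : realType) d (T : measurableType d)
    (P : probability T R) (X : {RV P >-> R}) : Prop :=
  forall A : set R, measurable A ->
    distribution P X A = uniform_prob (@ltr01 R) A.

Definition is_wCM (R : realType) d (T : measurableType d)
    (P : probability T R) (n : nat) (w : 'I_n -> R)
    (U : 'I_n -> {RV P >-> R}) : Prop :=
  P [set x | \sum_(i < n) w i * U i x = 2^-1 * \sum_(i < n) w i] = 1%E.

(* Main.v *)
Require Import Defs.
From HB Require Import structures.
From mathcomp Require Import all_boot all_order all_algebra.
From mathcomp Require Import all_classical all_reals all_analysis.
From mathcomp Require Import measurable_realfun.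
From mathcomp Require Import ring lra.
Set Implicit Arguments. Unset Strict Implicit. Unset Printing Implicit Defensive.
Import Order.TTheory GRing.Theory Num.Theory.
Local Open Scope classical_set_scope.
Local Open Scope ring_scope.

Section T.
Variable R : realFieldType.
Definition rot (c x : R) : R := if x + c < 1 then x + c else x + c - 1.
Definition tent (p x : R) : R := if x < p then 1 - x / p else (x - p) / (1 - p).

Lemma rotL c x : x + c < 1 -> rot c x = x + c.
Proof. by rewrite /rot => ->. Qed.
Lemma rotR c x : 1 <= x + c -> rot c x = x + c - 1.
Proof. by rewrite /rot leNgt => /negbTE ->. Qed.
Lemma tentL p x : x < p -> tent p x = 1 - x / p.
Proof. by rewrite /tent => ->. Qed.
Lemma tentR p x : p <= x -> tent p x = (x - p) / (1 - p).
Proof. by rewrite /tent leNgt => /negbTE ->. Qed.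

Lemma tri_id (al be ga u : R) : 0 <= al -> 0 <= be -> 0 <= ga ->
  0 < be + ga -> 0 < al + ga -> 0 <= u -> u < 1 ->
  let N := al * be + be * ga + ga * al in
  let t1 := al * ga / N in let t2 := al * be / N in
  (be + ga) * tent (t1 + t2) (rot 1 u) + (al + ga) * tent (1 - t1) (rot (1 - t1) u)
  + (al + be) * tent (1 - t2) (rot (1 - t1 - t2) u) = al + be + ga.
Proof.
move=> a0 b0 g0 bg ag u0 u1 N t1 t2.
have et1 : t1 = al * ga / N by [].
have et2 : t2 = al * be / N by [].
have eN : N = al * be + be * ga + ga * al by [].
clearbody t1 t2 N.
have N0 : 0 <= N by rewrite eN; nra.
rewrite (@rotR 1 u); last by lra.
rewrite addrK.
have [NE|Npos] := eqVneq N 0.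
  have t10 : t1 = 0 by rewrite et1 NE invr0 mulr0.
  have t20 : t2 = 0 by rewrite et2 NE invr0 mulr0.
  have ag0 : al * ga = 0 by move: NE; rewrite eN; nra.
  have al0 : al = 0.
    move/eqP: ag0; rewrite mulf_eq0 => /orP[/eqP//|/eqP g00].
    by move: NE; rewrite eN g00; nra.
  rewrite t10 t20 al0 !subr0 addr0 (@rotR 1 u) ?addrK; last by lra.
  rewrite tentR // tentL // !subr0 !divr1; lra.
have Np : 0 < N by rewrite lt_neqAle eq_sym Npos.
have t10 : 0 <= t1 by rewrite et1 divr_ge0 ?mulr_ge0 // ltW.
have t20 : 0 <= t2 by rewrite et2 divr_ge0 ?mulr_ge0 // ltW.
have t3 : t1 + t2 + be * ga / N = 1.
  rewrite et1 et2 -!mulrDl (_ : _ + _ + _ = N) ?divff ?gt_eqF // eN; ring.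
have t30 : 0 <= be * ga / N by rewrite divr_ge0 ?mulr_ge0 // ltW.
have [h1|h1] := ltrP u t1.
  have agp : 0 < al * ga.
    rewrite lt_neqAle mulr_ge0 // andbT; apply/eqP => e.
    by move: et1; rewrite -e mul0r => e'; lra.
  have al0 : al != 0 by apply/eqP => e; move: agp; rewrite e mul0r ltxx.
  have ga0 : ga != 0 by apply/eqP => e; move: agp; rewrite e mulr0 ltxx.
  rewrite tentL; last by lra.
  rewrite rotL; last by lra.
  rewrite tentR; last by lra.
  rewrite rotL; last by lra.
  rewrite tentL; last by lra.
  rewrite et1 et2 eN.
  field.
  have gp : 0 < ga by rewrite lt_neqAle eq_sym ga0.
  have alp : 0 < al by rewrite lt_neqAle eq_sym al0.
  by apply/and4P; split; apply: lt0r_neq0; nra.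
have [h2|h2] := ltrP u (t1 + t2).
  have abp : 0 < al * be.
    rewrite lt_neqAle mulr_ge0 // andbT; apply/eqP => e.
    by move: et2; rewrite -e mul0r => e'; lra.
  have al0 : al != 0 by apply/eqP => e; move: abp; rewrite e mul0r ltxx.
  have be0 : be != 0 by apply/eqP => e; move: abp; rewrite e mulr0 ltxx.
  have bp : 0 < be by rewrite lt_neqAle eq_sym be0.
  have alp : 0 < al by rewrite lt_neqAle eq_sym al0.
  rewrite tentL; last by lra.
  rewrite rotR; last by lra.
  rewrite tentL; last by lra.
  rewrite rotL; last by lra.
  rewrite tentR; last by lra.
  rewrite et1 et2 eN.
  field.
  by repeat (apply/andP; split); apply: lt0r_neq0; nra.
have bgp : 0 < be * ga.
  rewrite lt_neqAle mulr_ge0 // andbT; apply/eqP => e.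
  by move: t3; rewrite -e mul0r; lra.
have be0 : be != 0 by apply/eqP => e; move: bgp; rewrite e mul0r ltxx.
have ga0 : ga != 0 by apply/eqP => e; move: bgp; rewrite e mulr0 ltxx.
have bp : 0 < be by rewrite lt_neqAle eq_sym be0.
have gp : 0 < ga by rewrite lt_neqAle eq_sym ga0.
rewrite tentR; last by lra.
rewrite rotR; last by lra.
rewrite tentL; last by lra.
rewrite rotR; last by lra.
rewrite tentL; last by lra.
rewrite et1 et2 eN.
field.
by repeat (apply/andP; split); apply: lt0r_neq0; nra.
Qed.
End T.

Definition aff (R : realType) (a b : R) : measurableTypeR R -> measurableTypeR R :=
  fun x => a * x + b.

Lemma measurable_aff (R : realType) (a b : R) : measurable_fun setT (aff a b).
Proof.
by apply: measurable_funD => //; apply: measurable_funM.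
Qed.

Definition affm (R : realType) (a b : R) (A : set (measurableTypeR R)) : \bar R :=
  lebesgue_measure (aff a b @^-1` A).

Section affm.
Variables (R : realType) (a b : R).
Let affm0 : affm a b set0 = 0%E.
Proof. by rewrite /affm preimage_set0 measure0. Qed.
Let affm_ge0 A : (0 <= affm a b A)%E.
Proof. by apply: measure_ge0. Qed.
Let affm_sigma : semi_sigma_additive (affm a b).
Proof.
move=> F mF tF mUF; rewrite /affm preimage_bigcup.
apply: measure_semi_sigma_additive.
- by move=> n; rewrite -[X in measurable X]setTI; exact: measurable_aff.
- apply/trivIsetP => /= i j _ _ ij; rewrite -preimage_setI.
  by move/trivIsetP : tF => /(_ _ _ _ _ ij) ->//; rewrite preimage_set0.
- by rewrite -preimage_bigcup -[X in measurable X]setTI; exact: measurable_aff.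
Qed.
HB.instance Definition _ := isMeasure.Build _ _ _ (affm a b) affm0 affm_ge0 affm_sigma.
End affm.

Section S.
Variable R : realType.
Local Notation mu := (@lebesgue_measure R).

Lemma unifE (A : set R) : measurable A ->
  uniform_prob (@ltr01 R) A = mu (A `&` `[0, 1]).
Proof.
move=> mA; rewrite /uniform_prob integral_uniform_pdf.
rewrite (eq_integral (fun=> 1%:E)); last first.
  by move=> x; rewrite inE /= => -[_]; rewrite in_itv/= /uniform_pdf => ->; rewrite subr0 invr1.
rewrite integral_cst//=; last exact: measurableI.
by rewrite mul1e.
Qed.

Lemma mu_aff (a b : R) (B : set R) : a != 0 -> measurable B ->
  mu B = ((`|a|)%:E * mu (aff a b @^-1` B))%E.
Proof.
move=> a0 mB.
have := @lebesgue_measure_unique R (mscale (NngNum (normr_ge0 a)) (affm a b)).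
move=> /(_ _ B mB) ->; last first.
  move=> X /ocitvP [->|[[x1 x2]/= x12 ->]].
    by rewrite !measure0.
  rewrite /mscale /= /affm lebesgue_measure_itv/= lte_fin x12.
  have [apos|aneg] := ltrP 0 a.
    have -> : aff a b @^-1` `]x1, x2] = `](x1 - b) / a, (x2 - b) / a]%classic.
      apply/seteqP; split => x /=; rewrite /aff !in_itv /=.
        by move=> /andP[h1 h2]; rewrite ltr_pdivrMr// ler_pdivlMr// !(mulrC x); apply/andP; split; lra.
      by rewrite ltr_pdivrMr// ler_pdivlMr// !(mulrC x) => /andP[h1 h2]; apply/andP; split; lra.
    rewrite lebesgue_measure_itv/= lte_fin ltr_pM2r ?invr_gt0// ltrD2r x12.
    rewrite -EFinD -EFinM gtr0_norm//; congr EFin; field; exact: lt0r_neq0.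
  have an : a < 0 by rewrite lt_neqAle a0.
  have -> : aff a b @^-1` `]x1, x2] = `[(x2 - b) / a, (x1 - b) / a[%classic.
    apply/seteqP; split => x /=; rewrite /aff !in_itv /=.
      by move=> /andP[h1 h2]; rewrite ler_ndivrMr// ltr_ndivlMr// !(mulrC x); apply/andP; split; lra.
    by rewrite ler_ndivrMr// ltr_ndivlMr// !(mulrC x) => /andP[h1 h2]; apply/andP; split; lra.
  rewrite lebesgue_measure_itv/= lte_fin ltr_nM2r ?invr_lt0// ltrD2r x12.
  rewrite -EFinD -EFinM ltr0_norm//; congr EFin; field; exact: ltr0_neq0.
by [].
Qed.

Lemma mu_aff_pre (a b : R) (B : set R) : a != 0 -> measurable B ->
  mu (aff a b @^-1` B) = ((`|a|^-1)%:E * mu B)%E.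
Proof.
move=> a0 mB; rewrite (mu_aff b a0 mB) muleA -EFinM mulVf ?mul1e//.
by rewrite normr_eq0.
Qed.

Lemma muI_null (A X Y : set R) (l r : R) : measurable A -> measurable X ->
  measurable Y -> X `<=` Y -> Y `\` X `<=` [set l] `|` [set r] ->
  mu (A `&` X) = mu (A `&` Y).
Proof.
move=> mA mX mY XY YX.
rewrite [RHS](measureDI mu (measurableI _ _ mA mY) (measurableI _ _ mA mX)).
have -> : (A `&` Y) `&` (A `&` X) = A `&` X.
  by apply/seteqP; split => x /=; [case=> [[]]|case=> ax xX; split; split => //; apply: XY].
rewrite [X in (X + _)%E](_ : _ = 0%E) ?add0e //.
apply/eqP; rewrite eq_le measure_ge0 andbT.
have m1 : measurable ([set l] `|` [set r] : set R) by apply: measurableU.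
apply: (le_trans (@le_measure _ _ _ mu _ _ _ _ _)).
- by rewrite inE; apply: measurableD; apply: measurableI.
- by rewrite inE; exact: m1.
- by move=> x [[ax xY] nax]; apply: YX; split => // xX; apply: nax.
apply: (le_trans (measureU2 _ _ _)) => //.
change (@lebesgue_measure R [set l] + @lebesgue_measure R [set r] <= 0)%E.
by rewrite !lebesgue_measure_set1 adde0.
Qed.

Lemma unif01 (A : set R) : measurable A ->
  uniform_prob (@ltr01 R) A = mu (A `&` `[0, 1[).
Proof.
move=> mA; rewrite unifE//; apply/esym/(muI_null (l:=1) (r:=1)) => //.
- by move=> x /=; rewrite !in_itv/= => /andP[-> /ltW ->].
- move=> x [] /=; rewrite !in_itv/= => /andP[x0 x1] /negP; rewrite x0 /= -leNgt => x1'.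
  by left; apply/eqP; rewrite eq_le x1 x1'.
Qed.

Lemma muU (A B : set R) : measurable A -> measurable B -> A `&` B = set0 ->
  mu (A `|` B) = (mu A + mu B)%E.
Proof. move=> mA mB AB; exact: (measureU mu mA mB AB). Qed.


Lemma measurable_rot (c : R) : measurable_fun setT (rot c).
Proof.
apply: measurable_fun_ifT.
- by apply: measurable_fun_ltr => //; apply: measurable_funD.
- by apply: measurable_funD.
- by apply: measurable_funB => //; apply: measurable_funD.
Qed.

Lemma measurable_tent (p : R) : measurable_fun setT (tent p).
Proof.
apply: measurable_fun_ifT.
- by apply: measurable_fun_ltr.
- by apply: measurable_funB => //; apply: measurable_funM.
- by apply: measurable_funM => //; apply: measurable_funB.
Qed.

Lemma rot_pres (c : R) (A : set R) : 0 <= c <= 1 -> measurable A ->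
  mu (rot c @^-1` A `&` `[0, 1[) = mu (A `&` `[0, 1[).
Proof.
move=> /andP[c0 c1] mA.
have -> : rot c @^-1` A `&` `[0, 1[ =
    aff 1 c @^-1` (A `&` `[c, 1[) `|` aff 1 (c - 1) @^-1` (A `&` `[0, c[).
  apply/seteqP; split => x /=; rewrite /rot /aff !in_itv/= !mul1r.
    case: ifPn => xc [xA /andP[x0 x1]].
      by left; split => //; apply/andP; split => //; lra.
    by right; rewrite addrA; split => //; apply/andP; split; lra.
  case=> -[xA /andP[h1 h2]].
    by rewrite h2; split => //; apply/andP; split => //; lra.
  rewrite addrA in xA h1 h2 *; rewrite ifN; last by rewrite -leNgt; lra.
  by split => //; apply/andP; split; lra.
rewrite muU; last 3 first.
- by rewrite -[X in measurable X]setTI; apply: measurable_aff => //; apply: measurableI.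
- by rewrite -[X in measurable X]setTI; apply: measurable_aff => //; apply: measurableI.
- apply/seteqP; split => x //=; rewrite /aff !in_itv/= !mul1r.
  by case=> -[_ /andP[h1 h2]] [_ /andP[h3 h4]]; lra.
rewrite !mu_aff_pre ?oner_eq0//; last 2 first.
- by apply: measurableI.
- by apply: measurableI.
rewrite normr1 invr1 !mul1e -muU; last 3 first.
- by apply: measurableI.
- by apply: measurableI.
- apply/seteqP; split => x //=; rewrite !in_itv/=.
  by case=> -[_ /andP[h1 h2]] [_ /andP[h3 h4]]; lra.
congr (mu _); apply/seteqP; split => x /=; rewrite !in_itv/=.
  by case=> -[xA /andP[h1 h2]]; split => //; apply/andP; split; lra.
move=> [xA /andP[h1 h2]]; have [xc|xc] := ltrP x c.
  by right; split => //; apply/andP; split.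
by left; split => //; apply/andP; split.
Qed.

Lemma mu_oc_co (A : set R) : measurable A ->
  mu (A `&` `]0, 1]) = mu (A `&` `[0, 1[).
Proof.
move=> mA; rewrite (@muI_null A `]0, 1] `[0, 1] 0 0)//; last 2 first.
- by move=> x /=; rewrite !in_itv/= => /andP[/ltW -> ->].
- move=> x [] /=; rewrite !in_itv/= => /andP[x0 x1] /negP; rewrite x1 andbT -leNgt => x0'.
  by left; apply/eqP; rewrite eq_le x0 x0'.
rewrite (@muI_null A `[0, 1[ `[0, 1] 1 1)//.
- by move=> x /=; rewrite !in_itv/= => /andP[-> /ltW ->].
- move=> x [] /=; rewrite !in_itv/= => /andP[x0 x1] /negP; rewrite x0 /= -leNgt => x1'.
  by left; apply/eqP; rewrite eq_le x1 x1'.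
Qed.

Lemma tent_pres (p : R) (A : set R) : 0 <= p <= 1 -> measurable A ->
  mu (tent p @^-1` A `&` `[0, 1[) = mu (A `&` `[0, 1[).
Proof.
move=> /andP[p0 p1] mA.
have [->|pn0] := eqVneq p 0.
  congr (mu _); apply/seteqP; split => x /=; rewrite /tent !in_itv/=.
    by case=> + /andP[x0 x1]; rewrite ltNge x0/= !subr0 divr1 => xA; split => //; apply/andP; split.
  by case=> + /andP[x0 x1]; rewrite ltNge x0/= !subr0 divr1 => xA; split => //; apply/andP; split.
have {p0 pn0}pp : 0 < p by rewrite lt_neqAle eq_sym pn0.
have [->|pn1] := eqVneq p 1.
  have -> : tent 1 @^-1` A `&` `[0, 1[ = aff (-1) 1 @^-1` (A `&` `]0, 1]).
    apply/seteqP; split => x /=; rewrite /tent /aff !in_itv/= divr1 mulN1r.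
      by case=> + /andP[x0 x1]; rewrite x1 addrC => xA; split => //; apply/andP; split; lra.
    case=> xA /andP[h1 h2]; rewrite ifT; last by lra.
    by rewrite addrC; split => //; apply/andP; split; lra.
  rewrite mu_aff_pre ?oppr_eq0 ?oner_eq0//; last exact: measurableI.
  by rewrite normrN normr1 invr1 mul1e mu_oc_co.
have {pn1}p1 : p < 1 by rewrite lt_neqAle pn1.
have q0 : 0 < 1 - p by rewrite subr_gt0.
have -> : tent p @^-1` A `&` `[0, 1[ = aff (- p^-1) 1 @^-1` (A `&` `]0, 1])
    `|` aff ((1 - p)^-1) (- (p / (1 - p))) @^-1` (A `&` `[0, 1[).
  have ea x : - p^-1 * x + 1 = 1 - x / p by rewrite mulNr addrC mulrC.
  have eb x : (1 - p)^-1 * x + - (p / (1 - p)) = (x - p) / (1 - p).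
    by rewrite mulrBl mulrC -mulNr.
  apply/seteqP; split => x /=; rewrite /tent /aff !in_itv/= ea eb.
    case: ifPn => xp [xA /andP[x0 x1]].
      left; split => //; apply/andP; split.
        by rewrite subr_gt0 ltr_pdivrMr// mul1r.
      by rewrite lerBlDr lerDl; apply: divr_ge0 => //; exact: ltW.
    right; split => //; apply/andP; split.
      by apply: divr_ge0; [rewrite subr_ge0 leNgt | exact: ltW].
    by rewrite ltr_pdivrMr// mul1r ltrD2r.
  case=> -[xA /andP[h1 h2]].
    move: h1 h2; rewrite subr_gt0 ltr_pdivrMr// mul1r => xp.
    rewrite lerBlDr lerDl pmulr_lge0 ?invr_gt0// => x0.
    by rewrite xp; split => //; apply/andP; split => //; lra.
  move: h1 h2; rewrite pmulr_lge0 ?invr_gt0// subr_ge0 => px.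
  rewrite ltr_pdivrMr// mul1r ltrD2r => x1.
  by rewrite ltNge px/=; split => //; apply/andP; split => //; lra.
rewrite muU; last 3 first.
- by rewrite -[X in measurable X]setTI; apply: measurable_aff => //; apply: measurableI.
- by rewrite -[X in measurable X]setTI; apply: measurable_aff => //; apply: measurableI.
- apply/seteqP; split => x //=; rewrite /aff !in_itv/=.
  case=> -[_ /andP[h1 h2]] [_ /andP[h3 h4]].
  have : x < p by move: h1; rewrite mulNr addrC subr_gt0 mulrC ltr_pdivrMr// mul1r.
  have : p <= x.
    by move: h3; rewrite [_ * x]mulrC -mulrBl pmulr_lge0 ?invr_gt0// subr_ge0.
  lra.
rewrite !mu_aff_pre; last 4 first.
- by rewrite invr_eq0 gt_eqF.
- by apply: measurableI.
- by rewrite oppr_eq0 invr_eq0 gt_eqF.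
- by apply: measurableI.
rewrite normrN !gtr0_norm ?invr_gt0// !invrK mu_oc_co//.
rewrite -ge0_muleDl ?lee_fin ?ltW// -EFinD addrC subrK mul1e//.
Qed.

Lemma comp_pres (p c : R) (A : set R) : 0 <= p <= 1 -> 0 <= c <= 1 -> measurable A ->
  uniform_prob (@ltr01 R) ((fun x => tent p (rot c x)) @^-1` A) =
  uniform_prob (@ltr01 R) A.
Proof.
move=> hp hc mA.
have mT : measurable (tent p @^-1` A).
  by rewrite -[X in measurable X]setTI; apply: measurable_tent.
rewrite !unif01//; last first.
  rewrite -[X in measurable X]setTI.
  by apply: (measurableT_comp (measurable_tent p) (measurable_rot c)).
have -> : (fun x => tent p (rot c x)) @^-1` A = rot c @^-1` (tent p @^-1` A) by [].
by rewrite rot_pres// tent_pres.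
Qed.

Lemma measurable_tr (p c : R) : measurable_fun setT (fun x : R => tent p (rot c x)).
Proof. exact: (measurableT_comp (measurable_tent p) (measurable_rot c)). Qed.
End S.

Lemma measurable_trR (R : realType) (p c : R) :
  measurable_fun (setT : set (measurableTypeR R)) (fun x : R => tent p (rot c x)).
Proof. exact: measurable_tr. Qed.

Definition tr (R : realType) (p c : R) : {mfun measurableTypeR R >-> R} :=
  HB.pack (fun x : R => tent p (rot c x)) (isMeasurableFun.Build _ _ _ _ _ (measurable_trR p c)).

Lemma tr_unif (R : realType) (p c : R) : 0 <= p <= 1 -> 0 <= c <= 1 ->
  forall A : set R, measurable A ->
  distribution (uniform_prob (@ltr01 R)) (tr p c) A = uniform_prob (@ltr01 R) A.
Proof.
move=> hp hc A mA; rewrite /distribution /pushforward /=.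
exact: comp_pres.
Qed.

Lemma necessity (R : realType) n (w : 'I_n -> R) (hw : forall i, 0 < w i)
  d (T : measurableType d) (P : probability T R) (U : 'I_n -> {RV P >-> R}) :
  (forall i, is_uniform01 (U i)) -> is_wCM w U ->
  forall m, 2 * w m <= \sum_(i < n) w i.
Proof.
move=> hU hE m; rewrite /is_wCM in hE; rewrite leNgt; apply/negP => hlt.
set s := \sum_(i < n) w i in hE hlt.
have s0 : 0 <= s by apply: sumr_ge0 => i _; exact: ltW.
have wm0 := hw m.
pose t := s / (2 * w m).
have t0 : 0 <= t by rewrite divr_ge0 // mulr_ge0 // ltW.
have t1 : t < 1 by rewrite ltr_pdivrMr ?mulr_gt0 // mul1r.
have mf : measurable_fun setT (fun x => \sum_(i < n) w i * U i x).
  apply: measurable_sum => i.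
  apply: measurable_funM => //.
set E := [set x | _] in hE.
have mE : measurable E.
  have -> : E = setT `&` (fun x => \sum_(i < n) w i * U i x) @^-1` [set 2^-1 * s] by
    apply/seteqP; split => x //=; case.
  by apply: mf => //; exact: measurable_set1.
have nE : P.-negligible (~` E).
  apply/negligibleP; first exact: measurableC.
  by have := probability_setC P mE; rewrite hE subee // => h; exact: h.
pose Nall := [set x | [exists j, U j x < 0]].
have nN : P.-negligible Nall.
  apply: (@negligibleS _ _ _ _ (\big[setU/set0]_(j < n) (U j @^-1` `]-oo, 0[))).
    move=> x /= /existsP[j hj]; rewrite (bigD1 j) //=; left; rewrite /= in_itv /=; exact: hj.
  elim/big_ind : _ => //; [exact: negligible_set0|exact: negligibleU|].
  move=> j _; apply/negligibleP.
    exact: (@measurable_funPTI _ _ _ _ (U j : {mfun T >-> R}) _ (measurable_itv _)).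
  have := hU j `]-oo, 0[%classic (measurable_itv _); rewrite /distribution /pushforward => h; apply: (eq_trans h).
  rewrite unifE; last exact: measurable_itv.
  rewrite (_ : _ `&` _ = set0) ?measure0 //.
  by apply/seteqP; split => x //=; rewrite !in_itv /= => -[h1 /andP[h2 _]]; lra.
pose G := U m @^-1` `]t, +oo[.
have mG : measurable G.
  exact: (@measurable_funPTI _ _ _ _ (U m : {mfun T >-> R}) _ (measurable_itv _)).
have nG : P.-negligible G.
  apply: (@negligibleS _ _ _ _ (Nall `|` ~` E)); last exact: negligibleU.
  move=> x Gx; have [xE|] := pselect (E x); last by right.
  left; rewrite /Nall /=; apply/existsP; apply: contrapT => hx.
  have hx2 : forall j, 0 <= U j x by move=> j; rewrite leNgt; apply/negP => hj; apply: hx; exists j.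
  move: xE; rewrite /E /= (bigD1 m) //= => e.
  have h1 : 0 <= \sum_(i < n | i != m) w i * U i x.
    by apply: sumr_ge0 => i _; apply: mulr_ge0; [exact: ltW| exact: hx2].
  have h2 : t * w m < U m x * w m by rewrite ltr_pM2r //; move: Gx; rewrite /G /= in_itv /= andbT.
  have h3 : t * w m = 2^-1 * s by rewrite /t; field; rewrite gt_eqF.
  rewrite (mulrC (U m x)) h3 in h2; lra.
have hG := measure_negligible mG nG.
have h := hU m `]t, +oo[%classic (measurable_itv _).
rewrite /distribution /pushforward in h.
have {}hG := eq_trans (esym h) hG.
rewrite unifE in hG; last exact: measurable_itv.
have : `]t, +oo[ `&` `[0, 1] = `]t, 1]%classic :> set R.
  apply/seteqP; split => x /=; rewrite !in_itv /= ?andbT.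
    by case=> h1 /andP[h2 h3]; apply/andP; split.
  by move=> /andP[h1 h2]; split => //; apply/andP; split => //; lra.
move=> e; rewrite e lebesgue_measure_itv /= lte_fin t1 in hG.
by move: hG => /eqP; rewrite -EFinD eqe subr_eq0 eq_sym lt_eqF.
Qed.

Lemma tparams (R : realFieldType) (al be ga : R) : 0 <= al -> 0 <= be -> 0 <= ga ->
  let N := al * be + be * ga + ga * al in
  let t1 := al * ga / N in let t2 := al * be / N in
  [/\ 0 <= t1, 0 <= t2 & t1 + t2 <= 1].
Proof.
move=> a0 b0 g0 N t1 t2.
have N0 : 0 <= N by rewrite /N; nra.
have h1 : 0 <= t1 by rewrite /t1 divr_ge0 // mulr_ge0.
have h2 : 0 <= t2 by rewrite /t2 divr_ge0 // mulr_ge0.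
split => //.
have [NE|Npos] := eqVneq N 0.
  by rewrite /t1 /t2 NE invr0 !mulr0 addr0.
have Np : 0 < N by rewrite lt_neqAle eq_sym Npos.
rewrite /t1 /t2 -mulrDl ler_pdivrMr // mul1r /N; nra.
Qed.

Lemma sufficiency (R : realType) n (w : 'I_n -> R) (hn : (2 <= n)%N)
  (hw : forall i, 0 < w i) :
  (forall i, 2 * w i <= \sum_(i < n) w i) ->
  exists (d : measure_display) (T : measurableType d) (P : probability T R)
     (U : 'I_n -> {RV P >-> R}),
     (forall i, is_uniform01 (U i)) /\ is_wCM w U.
Proof.
move=> hw2.
set s := \sum_(i < n) w i in hw2 *.
have i0lt : (0 < n)%N by apply: leq_trans hn.
pose i0 : 'I_n := Ordinal i0lt.
have s0 : 0 < s.
  rewrite /s (bigD1 i0) //=; apply: ltr_pwDl; first exact: hw.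
  by apply: sumr_ge0 => i _; exact: ltW.
pose Pr j := (j <= n)%N && (\sum_(i < n | (i < j)%N) w i <= s / 2).
have exP : exists j, Pr j.
  by exists 0%N; rewrite /Pr leq0n /= big_pred0 //; rewrite divr_ge0 // ltW.
have bnd : forall j, Pr j -> (j <= n)%N by move=> j /andP[].
case: (ex_maxnP exP bnd) => k0 /andP[k0n hk0] kmax.
have k0lt : (k0 < n)%N.
  rewrite ltn_neqAle k0n andbT; apply/negP => /eqP ek.
  move: hk0; rewrite ek (eq_bigl xpredT) => [hs|i]; last by rewrite ltn_ord.
  by move: hs; rewrite -/s; lra.
pose k : 'I_n := Ordinal k0lt.
have hk1 : ~~ Pr k0.+1 by apply/negP => /kmax; rewrite ltnn.
have hab : s / 2 < \sum_(i < n | (i < k0)%N) w i + w k.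
  move: hk1; rewrite /Pr k0lt /= -ltNge (bigD1 k) ?ltnSn //= addrC.
  by rewrite (eq_bigl (fun i : 'I_n => (i < k0)%N)) // => i; rewrite ltnS ltn_neqAle andbC.
set a := \sum_(i < n | (i < k0)%N) w i in hk0 hab.
set b := w k in hab.
pose c := \sum_(i < n | ~~ (i < k0)%N && (i != k)) w i.
have hs : s = a + (b + c).
  by rewrite /s (bigID (fun i : 'I_n => (i < k0)%N)) /= [X in _ + X](bigD1 k) /= ?ltnn.
have k0pos : (1 <= k0)%N.
  apply: kmax; rewrite /Pr (leq_trans _ hn) //=.
  rewrite (eq_bigl (pred1 i0)) ?big_pred1_eq; last first.
    by move=> i; rewrite /= -val_eqE /=; case: (nat_of_ord i).
  by move: (hw2 i0); lra.
have ap : 0 < a.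
  rewrite /a (bigD1 i0) //=; apply: ltr_pwDl; first exact: hw.
  by apply: sumr_ge0 => i _; exact: ltW.
have bp : 0 < b by exact: hw.
have c0 : 0 <= c by apply: sumr_ge0 => i _; exact: ltW.
have hb2 : 2 * b <= s by exact: hw2.
pose al := b + c - a. pose be := a + c - b. pose ga := a + b - c.
have al0 : 0 <= al by rewrite /al; lra.
have be0 : 0 <= be by rewrite /be; lra.
have ga0 : 0 <= ga by rewrite /ga; lra.
have bg : 0 < be + ga by rewrite /be /ga; lra.
have ag : 0 < al + ga by rewrite /al /ga; lra.
pose N := al * be + be * ga + ga * al.
pose t1 := al * ga / N. pose t2 := al * be / N.
have [t10 t20 t12] : [/\ 0 <= t1, 0 <= t2 & t1 + t2 <= 1] by exact: tparams.
pose X0 := tr (t1 + t2) 1. pose X1 := tr (1 - t1) (1 - t1).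
pose X2 := tr (1 - t2) (1 - t1 - t2).
pose U (i : 'I_n) : {RV (uniform_prob (@ltr01 R)) >-> R} :=
  if (i < k0)%N then X0 else if i == k then X1 else X2.
exists _, (measurableTypeR R), (uniform_prob (@ltr01 R)), U.
split.
  move=> i A mA; rewrite /U; case: ifP => _; last case: ifP => _.
  - by apply: tr_unif => //; apply/andP; split => //; lra.
  - by apply: tr_unif => //; apply/andP; split => //; lra.
  - by apply: tr_unif => //; apply/andP; split => //; lra.
have hsum : forall x, \sum_(i < n) w i * U i x = a * X0 x + b * X1 x + c * X2 x.
  move=> x; rewrite (bigID (fun i : 'I_n => (i < k0)%N)) /= [X in _ + X](bigD1 k) /= ?ltnn //.
  rewrite /a /b /c !mulr_suml addrA; congr (_ + _ + _).
  - by apply: eq_bigr => i hi; rewrite /U hi.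
  - by rewrite /U ltnn eqxx.
  - by apply: eq_bigr => i /andP[/negbTE h1 /negbTE h2]; rewrite /U h1 h2.
have hid : forall x : R, 0 <= x < 1 -> a * X0 x + b * X1 x + c * X2 x = 2^-1 * s.
  move=> x /andP[x0 x1].
  have := tri_id al0 be0 ga0 bg ag x0 x1; rewrite -/N -/t1 -/t2 /= => e.
  have ea : be + ga = 2 * a by rewrite /be /ga; lra.
  have eb : al + ga = 2 * b by rewrite /al /ga; lra.
  have ec : al + be = 2 * c by rewrite /al /be; lra.
  have es : al + be + ga = s by rewrite hs /al /be /ga; lra.
  rewrite es ea eb ec in e.
  rewrite /X0 /X1 /X2 /=; lra.
rewrite /is_wCM.
set S := [set x | _].
have mS : measurable S.
  have -> : S = setT `&` (fun x => a * X0 x + b * X1 x + c * X2 x) @^-1` [set 2^-1 * s].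
    by apply/seteqP; split => x; rewrite /S /= hsum; [move=> h; split | case].
  apply: measurable_funD => //; [apply: measurable_funD => //|]; apply: measurable_funM => //; exact: measurable_funPT.
apply: (eq_trans (unif01 mS)).
rewrite (_ : S `&` _ = `[0, 1[%classic).
  by rewrite lebesgue_measure_itv /= lte_fin ltr01 -EFinD subr0.
apply/seteqP; split => x /=; first by case.
by move=> hx; split => //; rewrite /S /= hsum hid.
Qed.

Theorem mainTheorem8 (R : realType) (n : nat) (w : 'I_n -> R)
  (hn : (2 <= n)%N) (hw : forall i, 0 < w i) :
  (exists (d : measure_display) (T : measurableType d) (P : probability T R)
     (U : 'I_n -> {RV P >-> R}),
     (forall i, is_uniform01 (U i)) /\ is_wCM w U)
  <->
  \big[Order.max/0]_(i < n) w i
    <= \sum_(i < n) w i - \big[Order.max/0]_(i < n) w i.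
Proof.
split.
  case=> d [T [P [U [hU hE]]]].
  have h := necessity hw hU hE.
  have hs : 0 <= \sum_(i < n) w i by apply: sumr_ge0 => i _; exact: ltW.
  have : \big[Order.max/0]_(i < n) w i <= (\sum_(i < n) w i) / 2.
    apply: bigmax_le; first by rewrite divr_ge0.
    by move=> i _; have := h i; lra.
  lra.
move=> hM; apply: sufficiency => // i.
have := le_bigmax 0 w i; lra.
Qed.
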